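(* Let $\mathcal A$ be a commutative unital $C^*$-algebra, let $(E,\langle\cdot,\cdot\rangle)$ be a Hilbert $\mathcal A$-module, and let $\{x_i\}_{i\in\mathbb N}$ be a frame for $E$ with bounds $A,B$. Let $\xi\in E$ be such that $\langle\xi,\xi\rangle$ is invertible in $\mathcal A$, and equip $E$ with the standard $\mathcal A$-2-inner product $\langle x,y|z\rangle=\langle x,y\rangle\langle z,z\rangle-\langle x,z\rangle\langle z,y\rangle$. Then there exist real numbers $0<C\le D$ such that for all $x\in E$ $$C\langle x,x|\xi\rangle\le\sum_{i\in\mathbb N}\langle x,x_i|\xi\rangle\langle x_i,x|\xi\rangle\le D\langle x,x|\xi\rangle,$$ i.e. $\{x_i\}$ is an $\mathcal A$-2-frame associated to $\xi$ for this 2-inner product (one may take $D=B\|\langle\xi,\xi\rangle\|$).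
   Context: A Hilbert $\mathcal A$-module is a left $\mathcal A$-module $E$ with an $\mathcal A$-valued inner product $\langle\cdot,\cdot\rangle$ satisfying $\langle x,x\rangle\ge0$, $\langle x,x\rangle=0$ iff $x=0$, $\langle x,y\rangle=\langle y,x\rangle^*$, $\langle ax,by\rangle=a^*\langle x,y\rangle b$, complex-linear in the second variable, and complete for $\|x\|=\|\langle x,x\rangle\|^{1/2}$. A sequence $\{x_j\}_{j\in J}$ in $E$ is a frame for $E$ if there are real numbers $0<A\le B$ with $A\langle x,x\rangle\le\sum_{j}\langle x,x_j\rangle\langle x_j,x\rangle\le B\langle x,x\rangle$ for all $x\in E$ (order of self-adjoint elements of $\mathcal A$, series norm-convergent). *)

(* Defs.v *)
From mathcomp Require Import all_boot all_order all_algebra.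
From mathcomp Require Import all_classical all_reals all_analysis.
From mathcomp Require Import complex.
Set Implicit Arguments. Unset Strict Implicit. Unset Printing Implicit Defensive.
Import Order.TTheory GRing.Theory Num.Theory numFieldNormedType.Exports.
Local Open Scope ring_scope.
Local Open Scope complex_scope.
Local Open Scope classical_set_scope.

Record is_comCstar_algebra (R : realType) (A : completeNormedModType R[i])
    (mul : A -> A -> A) (one : A) (star : A -> A) : Prop := {
  cs_mulA : forall a b c, mul a (mul b c) = mul (mul a b) c;
  cs_mulC : forall a b, mul a b = mul b a;
  cs_mul1 : forall a, mul one a = a;
  cs_mulDl : forall a b c, mul (a + b) c = mul a c + mul b c;
  cs_mulZl : forall (k : R[i]) a b, mul (k *: a) b = k *: mul a b;
  cs_norm_mul : forall a b, `|mul a b| <= `|a| * `|b|;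
  cs_starK : forall a, star (star a) = a;
  cs_starD : forall a b, star (a + b) = star a + star b;
  cs_starZ : forall (k : R[i]) a, star (k *: a) = k^* *: star a;
  cs_starM : forall a b, star (mul a b) = mul (star b) (star a);
  cs_Cstar : forall a, `|mul (star a) a| = `|a| ^+ 2
}.

Definition cs_pos (R : realType) (A : completeNormedModType R[i])
  (mul : A -> A -> A) (star : A -> A) (a : A) : Prop :=
  exists c, a = mul (star c) c.

Definition cs_le (R : realType) (A : completeNormedModType R[i])
  (mul : A -> A -> A) (star : A -> A) (a b : A) : Prop :=
  cs_pos mul star (b - a).

Definition cs_invertible (R : realType) (A : completeNormedModType R[i])
  (mul : A -> A -> A) (one : A) (a : A) : Prop :=
  exists b, mul a b = one /\ mul b a = one.

(* Completeness is
   stated with the squared norm ||<x,x>||, which gives the same notions of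
   Cauchy sequence and of convergence. *)
Record is_hilbert_module (R : realType) (A : completeNormedModType R[i])
    (mul : A -> A -> A) (one : A) (star : A -> A)
    (E : lmodType R[i]) (act : A -> E -> E) (ip : E -> E -> A) : Prop := {
  hm_actM : forall a b x, act (mul a b) x = act a (act b x);
  hm_act1 : forall x, act one x = x;
  hm_actDl : forall a b x, act (a + b) x = act a x + act b x;
  hm_actDr : forall a x y, act a (x + y) = act a x + act a y;
  hm_actZl : forall (k : R[i]) a x, act (k *: a) x = k *: act a x;
  hm_actZr : forall (k : R[i]) a x, act a (k *: x) = k *: act a x;
  hm_ip_pos : forall x, cs_pos mul star (ip x x);
  hm_ip_def : forall x, ip x x = 0 -> x = 0;
  hm_ip_sym : forall x y, ip x y = star (ip y x);
  hm_ip_act : forall a b x y, ip (act a x) (act b y) = mul (mul (star a) (ip x y)) b;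
  hm_ipDr : forall x y z, ip x (y + z) = ip x y + ip x z;
  hm_ipZr : forall (k : R[i]) x y, ip x (k *: y) = k *: ip x y;
  hm_complete : forall u : nat -> E,
    (forall eps : R[i], 0 < eps -> exists N, forall m n, (N <= m)%N -> (N <= n)%N ->
        `|ip (u m - u n) (u m - u n)| < eps) ->
    exists l : E, forall eps : R[i], 0 < eps -> exists N, forall n, (N <= n)%N ->
        `|ip (u n - l) (u n - l)| < eps
}.

Definition series_to (R : realType) (A : completeNormedModType R[i])
  (f : nat -> A) (s : A) : Prop :=
  (fun n => \sum_(i < n) f i) @ \oo --> s.

Definition is_frame (R : realType) (A : completeNormedModType R[i])
    (mul : A -> A -> A) (star : A -> A)
    (E : lmodType R[i]) (ip : E -> E -> A) (xs : nat -> E) : Prop :=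
  exists (lb ub : R), 0 < lb /\ lb <= ub /\
    forall x : E, exists s : A,
      series_to (fun i => mul (ip x (xs i)) (ip (xs i) x)) s /\
      cs_le mul star ((lb%:C) *: ip x x) s /\
      cs_le mul star s ((ub%:C) *: ip x x).

Definition ip2 (R : realType) (A : completeNormedModType R[i])
    (mul : A -> A -> A) (E : lmodType R[i]) (ip : E -> E -> A) (x y z : E) : A :=
  mul (ip x y) (ip z z) - mul (ip x z) (ip z y).

(* Main.v *)
Require Import Defs.
Set Warnings "-notation-overridden,-ambiguous-paths,-redundant-canonical-projection,-notation-incompatible-prefix".
From HB Require Import structures.
From mathcomp Require Import all_boot all_order all_algebra.
From mathcomp Require Import all_classical all_reals all_analysis.
From mathcomp Require Import complex ring lra.
Import Order.TTheory GRing.Theory Num.Theory numFieldNormedType.Exports.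
Local Open Scope ring_scope.
Local Open Scope complex_scope.
Local Open Scope classical_set_scope.
Section S.
Variables (R : realType) (A : completeNormedModType R[i]) (mul : A -> A -> A) (one : A) (star : A -> A).
Hypothesis mulA : forall a b c, mul a (mul b c) = mul (mul a b) c.
Hypothesis mulC : forall a b, mul a b = mul b a.
Hypothesis mul1 : forall a, mul one a = a.
Hypothesis mulDl : forall a b c, mul (a + b) c = mul a c + mul b c.
Hypothesis mulZl : forall (k : R[i]) a b, mul (k *: a) b = k *: mul a b.
Hypothesis normM : forall a b, `|mul a b| <= `|a| * `|b|.
Hypothesis starK : forall a, star (star a) = a.
Hypothesis starD : forall a b, star (a + b) = star a + star b.
Hypothesis starZ : forall (k : R[i]) a, star (k *: a) = Num.conj k *: star a.
Hypothesis starM : forall a b, star (mul a b) = mul (star b) (star a).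
Hypothesis Cstar : forall a, `|mul (star a) a| = `|a| ^+ 2.
Hypothesis one0 : one != 0.

Definition AR : Type := A.
HB.instance Definition _ := CompleteNormedModule.on AR.
HB.instance Definition _ := GRing.Zmodule_isComNzRing.Build AR mulA mulC mul1 mulDl one0.
Lemma mulZl' (k : R[i]) (a b : AR) : k *: (a * b) = (k *: a) * b.
Proof. by rewrite /GRing.mul /= mulZl. Qed.
HB.instance Definition _ := GRing.Lmodule_isLalgebra.Build R[i] AR mulZl'.
HB.instance Definition _ := GRing.Lalgebra_isComAlgebra.Build R[i] AR.

Lemma test (k : R[i]) (a b : AR) : a * (k *: b) = k *: (a * b).
Proof. by rewrite scalerAr. Qed.

Definition nrm (x : AR) : R := complex.Re `|x|.
Lemma normE (x : AR) : `|x| = (nrm x)%:C.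
Proof.
have /ger0_Im h := normr_ge0 x.
by rewrite [LHS]complexE h mulr0 addr0.
Qed.
Lemma nrm_ge0 x : 0 <= nrm x.
Proof. by have := normr_ge0 x; rewrite normE ler0c. Qed.
Lemma nrmD x y : nrm (x + y) <= nrm x + nrm y.
Proof. by have := ler_normD x y; rewrite !normE -rmorphD lecR. Qed.
Lemma nrmN x : nrm (- x) = nrm x.
Proof. by rewrite /nrm normrN. Qed.
Lemma nrmB x y : nrm (x - y) = nrm (y - x).
Proof. by rewrite /nrm distrC. Qed.
Lemma nrm0 : nrm 0 = 0.
Proof. by rewrite /nrm normr0. Qed.
Lemma nrm_eq0 x : nrm x = 0 -> x = 0.
Proof. by move=> h; apply/normr0_eq0; rewrite normE h. Qed.
Lemma normcR (r : R) : `|r%:C| = `|r|%:C.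
Proof. by rewrite normc_def /= expr0n /= addr0 sqrtr_sqr. Qed.
Lemma nrmZ (r : R) x : nrm (r%:C *: x) = `|r| * nrm x.
Proof. by rewrite /nrm normrZ normcR normE -rmorphM. Qed.
Lemma nrmM (x y : AR) : nrm (x * y) <= nrm x * nrm y.
Proof. by have := normM x y; rewrite !normE -rmorphM lecR. Qed.
Definition st (x : AR) : AR := star x.
Lemma nrmC x : nrm (st x * x) = nrm x ^+ 2.
Proof. by have := Cstar x; rewrite !normE -rmorphXn => -[]. Qed.
Lemma stK x : st (st x) = x. Proof. exact: starK. Qed.
Lemma stD x y : st (x + y) = st x + st y. Proof. exact: starD. Qed.
Lemma stZ k x : st (k *: x) = Num.conj k *: st x. Proof. exact: starZ. Qed.
Lemma stM x y : st (x * y) = st x * st y.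
Proof. by rewrite /st starM mulC. Qed.
Lemma st0 : st 0 = 0.
Proof. by apply: (@addrI _ (st 0)); rewrite -stD !addr0. Qed.
Lemma stN x : st (- x) = - st x.
Proof. by apply/eqP; rewrite -addr_eq0 -stD addNr st0. Qed.
Lemma stB x y : st (x - y) = st x - st y.
Proof. by rewrite stD stN. Qed.
Lemma stR (r : R) x : st (r%:C *: x) = r%:C *: st x.
Proof. by rewrite stZ conj_Creal // complex_real. Qed.
Lemma st1 : st 1 = 1.
Proof.
have -> : st 1 = st 1 * st (st 1) by rewrite stK mulr1.
by rewrite -stM mul1r stK.
Qed.
Lemma nrm_st x : nrm (st x) = nrm x.
Proof.
have key : forall y, nrm y <= nrm (st y).
  move=> y; have := nrmC y; have := nrmM (st y) y.
  have := nrm_ge0 y; have := nrm_ge0 (st y); nra.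
by apply/le_anti; rewrite key /= -{2}(stK x) key.
Qed.
Lemma nrm1 : nrm 1 <= 1.
Proof. have := nrmC 1; rewrite st1 mulr1 => h. have := nrm_ge0 1. nra. Qed.

Definition cv (u : nat -> AR) (l : AR) :=
  forall e : R, 0 < e -> exists N, forall n, (N <= n)%N -> nrm (u n - l) < e.

Lemma ltcRe (e : R[i]) : 0 < e -> e = (complex.Re e)%:C /\ 0 < complex.Re e.
Proof.
move=> he; have := he; rewrite ltcE /= => /andP[/eqP hi hr]; split => //.
by rewrite [LHS]complexE hi mulr0 addr0.
Qed.

Lemma cvE u l : cv u l <-> u @ \oo --> l.
Proof.
split.
- move=> h; apply/cvgrPdistC_lt => eps /ltcRe [-> he].
  have [N hN] := h _ he; exists N => // n /= hn.
  by rewrite normE ltcR; apply: hN.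
- move=> /cvgr_distC_lt h e he.
  have he' : 0 < e%:C by rewrite ltcR.
  have [N _ hN] := h e%:C he'; exists N => n hn.
  by have := hN n hn; rewrite /= normE ltcR.
Qed.

Lemma cv_cauchy u : (forall e, 0 < e -> exists N, forall n, (N <= n)%N -> nrm (u n - u N) < e) ->
  exists l, cv u l.
Proof.
move=> h.
have : cvg (u @ \oo).
  apply: cauchy_cvg; apply: cauchy_exP => eps /ltcRe [-> he].
  have [N hN] := h _ he; exists (u N); exists N => // n /= hn.
  by rewrite -ball_normE /ball_ /= normE ltcR nrmB; exact: hN.
by move=> /cvg_ex [l hl]; exists l; apply/cvE.
Qed.

Lemma nrm_tri x y z : nrm (x - z) <= nrm (x - y) + nrm (y - z).
Proof. by have := nrmD (x - y) (y - z); rewrite addrA subrK. Qed.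

Lemma cv_unique u l m : cv u l -> cv u m -> l = m.
Proof.
move=> hl hm; apply/eqP; rewrite -subr_eq0; apply/eqP; apply: nrm_eq0.
have := nrm_ge0 (l - m); rewrite le_eqVlt => /orP[/eqP <-//|hd].
have he : 0 < nrm (l - m) / 2 by rewrite divr_gt0.
have [N1 h1] := hl _ he; have [N2 h2] := hm _ he.
have a := h1 (maxn N1 N2) (leq_maxl _ _); have b := h2 (maxn N1 N2) (leq_maxr _ _).
have c := nrm_tri l (u (maxn N1 N2)) m; rewrite nrmB in a; lra.
Qed.

Lemma cv_const c : cv (fun _ => c) c.
Proof. by move=> e he; exists 0%N => n _; rewrite subrr nrm0. Qed.

Lemma cv_ext u v l : (forall n, u n = v n) -> cv u l -> cv v l.
Proof. by move=> huv h e he; have [N hN] := h e he; exists N => n hn; rewrite -huv; apply: hN. Qed.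

Lemma cv_shift u l : cv u l -> cv (fun n => u n.+1) l.
Proof. by move=> h e he; have [N hN] := h e he; exists N => n hn; apply: hN; apply: leqW. Qed.

Lemma cv_add u v l m : cv u l -> cv v m -> cv (fun n => u n + v n) (l + m).
Proof.
move=> hu hv e he.
have he2 : 0 < e / 2 by rewrite divr_gt0.
have [N1 h1] := hu _ he2; have [N2 h2] := hv _ he2.
exists (maxn N1 N2) => n hn.
have a := h1 n (leq_trans (leq_maxl _ _) hn); have b := h2 n (leq_trans (leq_maxr _ _) hn).
have -> : u n + v n - (l + m) = (u n - l) + (v n - m) by rewrite opprD addrACA.
have := nrmD (u n - l) (v n - m); lra.
Qed.

Lemma cv_st u l : cv u l -> cv (fun n => st (u n)) (st l).
Proof. by move=> h e he; have [N hN] := h e he; exists N => n hn; rewrite -stB nrm_st; apply: hN. Qed.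

Lemma cv_mul u v l m : cv u l -> cv v m -> cv (fun n => u n * v n) (l * m).
Proof.
move=> hu hv e he.
set K := 1 + nrm l + nrm m.
have hK : 0 < K by have := nrm_ge0 l; have := nrm_ge0 m; rewrite /K; lra.
set d := Num.min 1 (e / K).
have hd : 0 < d by rewrite lt_min ltr01 divr_gt0.
have hd1 : d <= 1 by rewrite ge_min lexx.
have hdK : d * K <= e.
  have : d <= e / K by rewrite ge_min lexx orbT.
  by rewrite ler_pdivlMr.
have [N1 h1] := hu _ hd; have [N2 h2] := hv _ hd.
exists (maxn N1 N2) => n hn.
have a := h1 n (leq_trans (leq_maxl _ _) hn); have b := h2 n (leq_trans (leq_maxr _ _) hn).
have -> : u n * v n - l * m = (u n - l) * (v n - m) + (u n - l) * m + l * (v n - m) by ring.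
have c1 := nrmM (u n - l) (v n - m); have c2 := nrmM (u n - l) m; have c3 := nrmM l (v n - m).
have d1 := nrmD ((u n - l) * (v n - m) + (u n - l) * m) (l * (v n - m)).
have d2 := nrmD ((u n - l) * (v n - m)) ((u n - l) * m).
have p1 := nrm_ge0 (u n - l); have p2 := nrm_ge0 (v n - m).
have p3 := nrm_ge0 l; have p4 := nrm_ge0 m.
rewrite /K in hdK.
have q1 : nrm (u n - l) * nrm (v n - m) <= d * 1 by apply: ler_pM; lra.
have q2 : nrm (u n - l) * nrm m <= d * nrm m by apply: ler_wpM2r; lra.
have q3 : nrm l * nrm (v n - m) <= nrm l * d by apply: ler_wpM2l; lra.
nra.
Qed.

Arguments cv_unique {u l m}.
Arguments cv_ext {u v l}.
Arguments cv_shift {u l}.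
Arguments cv_add {u v l m}.
Arguments cv_st {u l}.
Arguments cv_mul {u v l m}.

Fixpoint tt (n : nat) : R := if n is k.+1 then (1 + tt k ^+ 2) / 2 else 0.
Lemma tt_bnd n : 0 <= tt n <= 1.
Proof. elim: n => [|n /andP[h1 h2]] /=; first by rewrite lexx ler01. apply/andP; split; nra. Qed.
Lemma tt_inc n : tt n <= tt n.+1.
Proof.
elim: n => [|n IH] /=; first by have := tt_bnd 0; simpl; nra.
have := tt_bnd n; have := tt_bnd n.+1; simpl; nra.
Qed.
Lemma tt_cauchy e : 0 < e -> exists N, forall n, (N <= n)%N -> tt n - tt N < e.
Proof.
move=> he.
have nd : nondecreasing_seq tt by apply/nondecreasing_seqP => n; exact: tt_inc.
have ub : has_ubound (range tt).
  by exists 1 => _ [n _ <-]; have /andP[] := tt_bnd n.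
have hs : has_sup (range tt) by split => //; exists (tt 0), 0%N.
have hc := nondecreasing_cvgn nd ub.
have hle : forall n, tt n <= sup (range tt) by move=> n; apply: sup_upper_bound => //; exists n.
move/cvgr_dist_lt: hc => /(_ e he) [N _ hN].
exists N => n hn; have := hN N (leqnn N); have := hle n; rewrite /=.
move=> h1 h2; have h3 := ler_norm (sup (range tt) - tt N); lra.
Qed.

Definition half : R[i] := (2^-1 : R)%:C.
Fixpoint zz (w : AR) (n : nat) : AR := if n is k.+1 then half *: (w + zz w k * zz w k) else 0.

Lemma halfE (x : AR) : half *: x + half *: x = x.
Proof.
have h : (2^-1 + 2^-1 : R) = 1 by lra.
by rewrite -scalerDl /half -rmorphD h scale1r.
Qed.

Lemma zz_bnd w : nrm w <= 1 -> forall n, nrm (zz w n) <= tt n.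
Proof.
move=> hw; elim=> [|n IH] /=; first by rewrite nrm0.
rewrite /half nrmZ ger0_norm; last by rewrite invr_ge0 ler0n.
have := nrmD w (zz w n * zz w n); have := nrmM (zz w n) (zz w n).
have := nrm_ge0 (zz w n); have := tt_bnd n; nra.
Qed.

Lemma zz_cau w : nrm w <= 1 -> forall n k, nrm (zz w (n + k) - zz w n) <= tt (n + k) - tt n.
Proof.
move=> hw; elim=> [|n IH] k.
  by rewrite add0n /= subr0 subr0; apply: zz_bnd.
rewrite addSn /=.
set a := zz w (n + k); set b := zz w n.
have -> : half *: (w + a * a) - half *: (w + b * b) = half *: ((a - b) * (a + b)).
  by rewrite -scalerBr; congr (_ *: _); ring.
rewrite /half nrmZ ger0_norm; last by rewrite invr_ge0 ler0n.
have h1 := nrmM (a - b) (a + b); have h2 := nrmD a b; have h3 := IH k.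
have h4 : nrm a <= tt (n + k) by apply: zz_bnd.
have h5 : nrm b <= tt n by apply: zz_bnd.
have h6 := nrm_ge0 (a - b); have h7 := nrm_ge0 (a + b).
have h8 : nrm (a - b) * nrm (a + b) <= (tt (n + k) - tt n) * (tt (n + k) + tt n).
  by apply: ler_pM => //; lra.
nra.
Qed.

Lemma zz_st w : st w = w -> forall n, st (zz w n) = zz w n.
Proof. by move=> hw; elim=> [|n IH] /=; rewrite ?st0 // /half stR stD stM IH hw. Qed.

Lemma sqrt_ex w : st w = w -> nrm w <= 1 -> exists b, st b = b /\ b * b = 1 - w.
Proof.
move=> hs hw.
have [l hl] : exists l, cv (zz w) l.
  apply: cv_cauchy => e he; have [N hN] := @tt_cauchy e he.
  exists N => n hn; have := zz_cau w hw N (n - N); rewrite subnKC //.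
  have := hN n hn; lra.
have e1 : l + l = w + l * l.
  apply: (@cv_unique (fun n => zz w n.+1 + zz w n.+1)).
    exact: cv_add (cv_shift hl) (cv_shift hl).
  apply: (@cv_ext (fun n => w + zz w n * zz w n)).
    by move=> n /=; rewrite halfE.
  exact: cv_add (cv_const w) (cv_mul hl hl).
have e2 : st l = l.
  apply: (@cv_unique (zz w) _ _ _ (hl)) .
  apply: (@cv_ext (fun n => st (zz w n))); first by move=> n; rewrite zz_st.
  exact: cv_st hl.
exists (1 - l); split; first by rewrite stB st1 e2.
have -> : w = l + l - l * l by rewrite e1; ring.
ring.
Qed.

Arguments sqrt_ex {w}.

Definition pos (h : AR) := exists c, h = st c * c.
Definition Pn (h : AR) := st h = h /\ exists t : R, 0 <= t /\ nrm (t%:C *: 1 - h) <= t.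

Lemma scaleCA (r s : R) (x : AR) : r%:C *: (s%:C *: x) = (r * s)%:C *: x.
Proof. by rewrite scalerA -rmorphM. Qed.

Lemma Pn_pos h : Pn h -> pos h.
Proof.
move=> [hs [t [ht hn]]].
case: (eqVneq t 0) => [t0|tn0].
  move: hn; rewrite t0 scale0r sub0r nrmN => hn.
  have h0 : h = 0 by apply: nrm_eq0; have := nrm_ge0 h; lra.
  by exists 0; rewrite h0 st0 mulr0.
have tp : 0 < t by rewrite lt_neqAle eq_sym tn0 ht.
set w := 1 - (t^-1)%:C *: h.
have hw1 : st w = w by rewrite /w stB st1 stR hs.
have hw2 : w = (t^-1)%:C *: (t%:C *: 1 - h).
  by rewrite scalerBr scaleCA mulVf // scale1r.
have hw3 : nrm w <= 1.
  rewrite hw2 nrmZ ger0_norm ?invr_ge0 //.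
  have : t^-1 * nrm (t%:C *: 1 - h) <= t^-1 * t by apply: ler_wpM2l; rewrite ?invr_ge0.
  by rewrite mulVf.
have [b [hb1 hb2]] := sqrt_ex hw1 hw3.
exists ((Num.sqrt t)%:C *: b).
rewrite stR hb1 -scalerAl -scalerAr scaleCA -expr2 sqr_sqrtr // hb2 /w.
by rewrite opprB addrC subrK scaleCA mulfV // scale1r.
Qed.

Lemma normCi' : nrm ('i%R *: (1 : AR)) = nrm 1.
Proof. by rewrite /nrm normrZ normCi mul1r. Qed.

Lemma Pn_sq a : st a = a -> Pn (a * a).
Proof.
move=> ha; split; first by rewrite stM ha.
case: (eqVneq (nrm a) 0) => [r0|rn0].
  have a0 : a = 0 by apply: nrm_eq0.
  by exists 0; rewrite lexx a0 mulr0 scale0r subr0 nrm0.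
set r := nrm a.
have rp : 0 < r by rewrite lt_neqAle eq_sym rn0 nrm_ge0.
set a' := (r^-1)%:C *: a.
have haa : a = r%:C *: a' by rewrite /a' scaleCA mulfV // scale1r.
have ha'1 : st a' = a' by rewrite /a' stR ha.
have ha'2 : nrm a' = 1 by rewrite /a' nrmZ ger0_norm ?invr_ge0 ?mulVf // ltW.
set w := a' * a'.
have hw1 : st w = w by rewrite /w stM ha'1.
have hw2 : nrm w <= 1 by have := nrmM a' a'; rewrite ha'2 mulr1.
have [c [hc1 hc2]] := sqrt_ex hw1 hw2.
set I : AR := 'i%R *: 1.
have hI : I * I = -1 by rewrite /I -scalerAl mul1r scalerA -expr2 sqrCi scaleN1r.
have hIs : st I = - I by rewrite /I stZ conjCi st1 scaleNr.
have hIn : nrm I = nrm (1 : AR) by exact: normCi'.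
set u := a' + I * c.
have hus : st u = a' - I * c by rewrite /u stD stM hIs ha'1 hc1 mulNr.
have huu : st u * u = 1.
  rewrite hus /u.
  have -> : (a' - I * c) * (a' + I * c) = a' * a' - (I * I) * (c * c) by ring.
  by rewrite hI hc2 /w; ring.
have hun : nrm u <= 1.
  have := nrmC u; rewrite huu => h1; have := nrm1; have := nrm_ge0 u; nra.
have hc : nrm c <= 1.
  have e1 : I * (u - st u) = - (c + c).
    rewrite hus /u.
    have -> : I * (a' + I * c - (a' - I * c)) = (I * I) * (c + c) by ring.
    by rewrite hI; ring.
  have e2 := nrmM I (u - st u).
  have e3 := nrmD u (- st u); rewrite nrmN nrm_st in e3.
  rewrite e1 nrmN hIn in e2.
  have e4 : nrm (c + c) = 2 * nrm c.
    have -> : c + c = 2%:R%:C *: c by rewrite rmorph_nat scaler_nat mulr2n.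
    by rewrite nrmZ ger0_norm.
  have := nrm1; have := nrm_ge0 (u - st u); have := nrm_ge0 (1 : AR); nra.
exists (r ^+ 2); split; first by rewrite exprn_ge0 // ltW.
have -> : (r ^+ 2)%:C *: 1 - a * a = (r ^+ 2)%:C *: (c * c).
  rewrite hc2 /w haa -scalerAl -scalerAr scaleCA -expr2 scalerBr; ring.
have := nrmM c c; have := nrm_ge0 c.
rewrite nrmZ (ger0_norm (exprn_ge0 _ (nrm_ge0 a))).
move=> h1 h2. have h3 : nrm (c * c) <= 1 by nra.
have h4 : 0 < r ^+ 2 by rewrite exprn_gt0.
nra.
Qed.

Lemma Pn_add p q : Pn p -> Pn q -> Pn (p + q).
Proof.
move=> [hp [t1 [ht1 hn1]]] [hq [t2 [ht2 hn2]]]; split; first by rewrite stD hp hq.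
exists (t1 + t2); split; first by rewrite addr_ge0.
have -> : (t1 + t2)%:C *: 1 - (p + q) = (t1%:C *: 1 - p) + (t2%:C *: 1 - q).
  by rewrite rmorphD scalerDl; ring.
by have := nrmD (t1%:C *: 1 - p) (t2%:C *: 1 - q); lra.
Qed.

Arguments Pn_add {p q}.
Arguments Pn_sq {a}.
Arguments Pn_pos {h}.

Lemma pos_Pn h : pos h -> Pn h.
Proof.
move=> [c ->].
set H : AR := half *: 1.
set I : AR := 'i%R *: 1.
have hI : I * I = -1 by rewrite /I -scalerAl mul1r scalerA -expr2 sqrCi scaleN1r.
have hIs : st I = - I by rewrite /I stZ conjCi st1 scaleNr.
have hH : H + H = 1 by rewrite /H halfE.
have hHs : st H = H by rewrite /H /half stR st1.
set a := H * (c + st c).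
set b := H * I * (st c - c).
have ha : st a = a by rewrite /a stM hHs stD stK addrC.
have hb : st b = b.
  by rewrite /b !stM hHs hIs stB stK; ring.
have -> : st c * c = a * a + b * b.
  rewrite /a /b.
  have -> : H * (c + st c) * (H * (c + st c)) + H * I * (st c - c) * (H * I * (st c - c))
     = H * H * ((c + st c) * (c + st c) + (I * I) * ((st c - c) * (st c - c))) by ring.
  rewrite hI.
  have -> : H * H * ((c + st c) * (c + st c) + -1 * ((st c - c) * (st c - c)))
     = (H + H) * (H + H) * (st c * c) by ring.
  by rewrite hH; ring.
exact: Pn_add (Pn_sq ha) (Pn_sq hb).
Qed.

Lemma pos_add p q : pos p -> pos q -> pos (p + q).
Proof. by move=> /pos_Pn hp /pos_Pn hq; apply: Pn_pos; apply: Pn_add. Qed.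

Lemma pos_mul p q : pos p -> pos q -> pos (p * q).
Proof. by move=> [c ->] [d ->]; exists (c * d); rewrite stM; ring. Qed.

Lemma pos_scale (r : R) p : 0 <= r -> pos p -> pos (r%:C *: p).
Proof.
move=> hr [c ->]; exists ((Num.sqrt r)%:C *: c).
by rewrite stR -scalerAl -scalerAr scaleCA -expr2 sqr_sqrtr.
Qed.

Lemma pos_cst (r : R) : 0 <= r -> pos (r%:C *: 1).
Proof. by move=> hr; apply: pos_scale => //; exists 1; rewrite st1 mulr1. Qed.

Lemma pos_st h : pos h -> st h = h.
Proof. by move=> [c ->]; rewrite stM stK mulrC. Qed.

Lemma pos_normsub h : pos h -> pos ((nrm h)%:C *: 1 - h).
Proof.
move=> hp; apply: Pn_pos; split; first by rewrite stB stR st1 pos_st.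
exists (nrm h); split; first exact: nrm_ge0.
by rewrite opprB addrC subrK.
Qed.

Arguments pos_Pn {h}.
Arguments pos_add {p q}.
Arguments pos_mul {p q}.
Arguments pos_scale {r p}.
Arguments pos_st {h}.
Arguments pos_normsub {h}.

Lemma inv_lb g gi : pos g -> g * gi = 1 -> exists c : R, 0 < c /\ pos (g - c%:C *: 1).
Proof.
move=> hpg hg; have hgs := pos_st hpg; case: hpg => k hk.
have e : g * st gi = 1 by rewrite -hgs -stM hg st1.
have hgis : st gi = gi by rewrite -[st gi]mulr1 -hg mulrA (mulrC (st gi) g) e mul1r.
have hpi : pos gi.
  exists (k * gi); have -> : st (k * gi) * (k * gi) = (st k * k * gi) * gi by rewrite stM hgis; ring.
  by rewrite -hk hg mul1r.
have gin0 : nrm gi != 0.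
  apply/eqP => /nrm_eq0 h0; move: hg; rewrite h0 mulr0 => /esym /eqP; by rewrite oner_eq0.
have mp : 0 < nrm gi by rewrite lt_neqAle eq_sym gin0 nrm_ge0.
exists (nrm gi)^-1; split; first by rewrite invr_gt0.
have h1 := pos_mul (pos_normsub hpi) (ex_intro _ k hk).
have mi : 0 <= (nrm gi)^-1 by rewrite invr_ge0 ltW.
have h2 := pos_scale mi h1.
suff -> : g - ((nrm gi)^-1)%:C *: 1 = ((nrm gi)^-1)%:C *: (((nrm gi)%:C *: 1 - gi) * g) by [].
rewrite mulrBl -scalerAl mul1r (mulrC gi g) hg scalerBr scaleCA mulVf // scale1r.
by [].
Qed.

Lemma inv_st g gi : pos g -> g * gi = 1 -> st gi = gi.
Proof.
move=> hpg hg; have hgs := pos_st hpg.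
have e : g * st gi = 1 by rewrite -hgs -stM hg st1.
by rewrite -[st gi]mulr1 -hg mulrA (mulrC (st gi) g) e mul1r.
Qed.

Arguments inv_st {g gi}.
Arguments inv_lb {g gi}.

Lemma scl (r : R) (x : AR) : r%:C *: x = (r%:C *: 1) * x.
Proof. by rewrite -scalerAl mul1r. Qed.
Lemma algM (r s : R) : (r * s)%:C *: (1 : AR) = (r%:C *: 1) * (s%:C *: 1).
Proof. by rewrite -scalerAl mul1r scaleCA. Qed.
Lemma algD (r s : R) : (r + s)%:C *: (1 : AR) = (r%:C *: 1) + (s%:C *: 1).
Proof. by rewrite rmorphD scalerDl. Qed.

Section Mod.
Variables (E : lmodType R[i]) (act : A -> E -> E) (ip : E -> E -> A).
Hypothesis HM : is_hilbert_module mul one star act ip.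

Definition ipr (x y : E) : AR := ip x y.
Lemma ipr_sym x y : st (ipr x y) = ipr y x.
Proof. by rewrite /st /ipr (hm_ip_sym HM y x). Qed.
Lemma iprN x y : ipr x (- y) = - ipr x y.
Proof. by rewrite /ipr -scaleN1r (hm_ipZr HM) scaleN1r. Qed.
Lemma iprBr x y z : ipr x (y - z) = ipr x y - ipr x z.
Proof. by rewrite /ipr (hm_ipDr HM) -/(ipr x (- z)) iprN. Qed.
Lemma iprBl x y z : ipr (x - y) z = ipr x z - ipr y z.
Proof. by rewrite -ipr_sym iprBr stB !ipr_sym. Qed.
Lemma ipr_actl a x z : ipr (act a x) z = st a * ipr x z.
Proof.
by rewrite /ipr -{1}(hm_act1 HM z) (hm_ip_act HM) [mul _ one]mulC mul1.
Qed.
Lemma ipr_actr a x z : ipr z (act a x) = ipr z x * a.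
Proof.
by rewrite /ipr -{1}(hm_act1 HM z) (hm_ip_act HM) -/(st one) st1 mul1.
Qed.
Lemma ipr_pos x : pos (ipr x x).
Proof. exact: (hm_ip_pos HM x). Qed.

Lemma main_nz (xs : nat -> E) (xi : E) :
  is_frame mul star ip xs -> cs_invertible mul one (ip xi xi) ->
  exists (C D : R), 0 < C /\ C <= D /\ forall x : E, exists s : A,
    series_to (fun i => mul (ip2 mul ip x (xs i) xi) (ip2 mul ip (xs i) x xi)) s /\
    cs_le mul star ((C%:C) *: ip2 mul ip x x xi) s /\
    cs_le mul star s ((D%:C) *: ip2 mul ip x x xi).
Proof.
move=> [lb [ub [hlb [hlu hfr]]]] [gi0 [hg1 _]].
set gi : AR := gi0.
set g : AR := ipr xi xi.
have hg : g * gi = 1 := hg1.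
have pg : pos g := ipr_pos xi.
have hgi := inv_st pg hg.
have [c0 [hc0 pc0]] := inv_lb pg hg.
have hub : 0 <= ub by lra.
have hC : 0 <= lb * c0 by rewrite mulr_ge0 // ltW.
exists (lb * c0), (ub * nrm g + lb * c0).
split; first by rewrite mulr_gt0.
split; first by have := mulr_ge0 hub (nrm_ge0 g); lra.
move=> x.
set al : AR := gi * ipr xi x.
set y := x - act al xi.
have hal : st al = ipr x xi * gi by rewrite /al stM hgi ipr_sym mulrC.
have hy1 : forall z, ipr y z = ipr x z - st al * ipr xi z by move=> z; rewrite iprBl ipr_actl.
have hy2 : forall z, ipr z y = ipr z x - ipr z xi * al by move=> z; rewrite iprBr ipr_actr.
have key1 : forall z, (ip2 mul ip x z xi : AR) = ipr y z * g.
  move=> z; rewrite hy1 hal.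
  change (ipr x z * g - ipr x xi * ipr xi z = (ipr x z - ipr x xi * gi * ipr xi z) * g).
  have -> : (ipr x z - ipr x xi * gi * ipr xi z) * g = ipr x z * g - ipr x xi * ipr xi z * (g * gi) by ring.
  by rewrite hg mulr1.
have key2 : forall z, (ip2 mul ip z x xi : AR) = ipr z y * g.
  move=> z; rewrite hy2 /al.
  change (ipr z x * g - ipr z xi * ipr xi x = (ipr z x - ipr z xi * (gi * ipr xi x)) * g).
  have -> : (ipr z x - ipr z xi * (gi * ipr xi x)) * g = ipr z x * g - ipr z xi * ipr xi x * (g * gi) by ring.
  by rewrite hg mulr1.
have hyxi : ipr y xi = 0.
  by rewrite hy1 hal -/g -mulrA (mulrC gi g) hg mulr1 subrr.
have hyy : ipr y y = ipr y x by rewrite hy2 hyxi mul0r subr0.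
have key3 : (ip2 mul ip x x xi : AR) = ipr y y * g by rewrite key1 hyy.
have ph : pos (ipr y y) := ipr_pos y.
have [sy [hs [hlo hup]]] := hfr y.
have hp : pos (sy - lb%:C *: ipr y y) := hlo.
have hq : pos (ub%:C *: ipr y y - sy) := hup.
set h := ipr y y.
exists ((g * g) * sy); split; [|split].
- apply/cvE; move/cvE: hs => hs'.
  apply: (cv_ext _ (cv_mul (cv_const (g * g)) hs')) => n /=.
  rewrite mulr_sumr; apply: eq_bigr => i _.
  change (g * g * (ipr y (xs i) * ipr (xs i) y) = (ip2 mul ip x (xs i) xi : AR) * (ip2 mul ip (xs i) x xi : AR)).
  by rewrite key1 key2; ring.
- change (pos ((g * g) * sy - (lb * c0)%:C *: (ip2 mul ip x x xi : AR))).
  rewrite key3 -/h.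
  have -> : g * g * sy - (lb * c0)%:C *: (h * g) = (g * g) * (sy - lb%:C *: h) + (h * g) * (lb%:C *: (g - c0%:C *: 1)).
    rewrite (scl (lb * c0)) (scl lb h) (scl lb (g - _)) algM; ring.
  apply: pos_add; first by apply: pos_mul => //; exact: pos_mul.
  by apply: pos_mul; [exact: pos_mul | exact: pos_scale (ltW hlb) pc0].
- change (pos ((ub * nrm g + lb * c0)%:C *: (ip2 mul ip x x xi : AR) - (g * g) * sy)).
  rewrite key3 -/h.
  have -> : (ub * nrm g + lb * c0)%:C *: (h * g) - g * g * sy = (g * g) * (ub%:C *: h - sy) + (h * g) * (ub%:C *: ((nrm g)%:C *: 1 - g) + (lb * c0)%:C *: 1).
    rewrite (scl (ub * nrm g + lb * c0)) (scl ub h) (scl ub (_ - g)) algD !algM; ring.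
  apply: pos_add; first by apply: pos_mul => //; exact: pos_mul.
  apply: pos_mul; first exact: pos_mul.
  apply: pos_add; first exact: pos_scale hub (pos_normsub pg).
  exact: pos_cst.
Qed.
End Mod.
End S.

Theorem proposition2p2 (R : realType) (A : completeNormedModType R[i])
    (mul : A -> A -> A) (one : A) (star : A -> A)
    (E : lmodType R[i]) (act : A -> E -> E) (ip : E -> E -> A)
    (xs : nat -> E) (xi : E) :
  is_comCstar_algebra mul one star ->
  is_hilbert_module mul one star act ip ->
  is_frame mul star ip xs ->
  cs_invertible mul one (ip xi xi) ->
  exists (C D : R), 0 < C /\ C <= D /\
    forall x : E, exists s : A,
      series_to (fun i => mul (ip2 mul ip x (xs i) xi) (ip2 mul ip (xs i) x xi)) s /\
      cs_le mul star ((C%:C) *: ip2 mul ip x x xi) s /\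
      cs_le mul star s ((D%:C) *: ip2 mul ip x x xi).
Proof.
move=> [mulA mulC mul1 mulDl mulZl normM starK starD starZ starM Cstar] HM HF HI.
case: (eqVneq one 0) => [ho0|hon0]; last first.
  exact: (@main_nz R A mul one star mulA mulC mul1 mulDl mulZl normM starK starD starZ starM Cstar hon0 E act ip HM xs xi HF HI).
have m0 : forall a, mul 0 a = 0.
  by move=> a; apply: (@addrI _ (mul 0 a)); rewrite -mulDl !addr0.
have z : forall a : A, a = 0 by move=> a; rewrite -(mul1 a) ho0 m0.
exists 1, 1; split; first exact: ltr01.
split; first exact: lexx.
move=> x; exists 0; split; last by split; exists 0; rewrite [LHS]z [RHS]z.
rewrite /series_to.
have -> : (fun n => \sum_(i < n) mul (ip2 mul ip x (xs i) xi) (ip2 mul ip (xs i) x xi)) = (fun _ => 0).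
  by apply/funext => n; exact: z.
exact: cvg_cst.
Qed.
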